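(* Let code 1 be a stabiliser code with disjointness $\delta_1$ and let code 2 be a stabiliser code encoding one logical qubit with disjointness $\delta_2$. Let the concatenated code be obtained by encoding each physical qubit of code 1 into a block of code 2, and let $\Delta$ be its disjointness. Then $\Delta\ge\delta_1\delta_2$.
   Context: Disjointness of a stabiliser code: for an integer $c\ge1$, a collection of representatives of a logical operator is $c$-disjoint if no physical qubit lies in the support of more than $c$ of them; the unnormalised $c$-disjointness $\Delta'_c$ is the largest integer such that every logical Pauli operator admits at least $\Delta'_c$ representatives forming a $c$-disjoint collection; the (normalised) $c$-disjointness is $\Delta_c=\Delta'_c/c$, and the disjointness is $\Delta=\max_{c\in\mathbb{Z}_+}\Delta_c$. *)

(* Defs.v *)
From mathcomp Require Import all_boot all_order all_algebra.
From mathcomp Require Import classical_sets reals.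

Set Implicit Arguments.
Unset Strict Implicit.
Unset Printing Implicit Defensive.

Import GRing.Theory Num.Theory.

(* Pauli operators on the qubit set Q, modulo phases (symplectic form):
   at each qubit a pair (x,z) of bits; (0,0)=I, (1,0)=X, (0,1)=Z, (1,1)=Y. *)
Definition pauli (Q : finType) := {ffun Q -> bool * bool}.

Definition pid (Q : finType) : pauli Q := [ffun _ => (false, false)].

Definition pmul (Q : finType) (P R : pauli Q) : pauli Q :=
  [ffun i => ((P i).1 (+) (R i).1, (P i).2 (+) (R i).2)].

Definition support (Q : finType) (P : pauli Q) : {set Q} :=
  [set i | P i != (false, false)].

(* P and R commute iff they anticommute on an even number of qubits *)
Definition commuteb (Q : finType) (P R : pauli Q) : bool :=
  ~~ odd #|[set i | ((P i).1 && (R i).2) (+) ((P i).2 && (R i).1)]|.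

(* S is (the phase-free image of) a stabiliser group *)
Definition is_stabiliser (Q : finType) (S : {set pauli Q}) : Prop :=
  [/\ pid Q \in S,
      (forall P R, P \in S -> R \in S -> pmul P R \in S) &
      (forall P R, P \in S -> R \in S -> commuteb P R)].

Definition normaliser (Q : finType) (S : {set pauli Q}) : {set pauli Q} :=
  [set P | [forall s in S, commuteb P s]].

Definition nontrivial_logical (Q : finType) (S : {set pauli Q}) (L : pauli Q) :=
  (L \in normaliser S) && (L \notin S).

Definition reps (Q : finType) (S : {set pauli Q}) (L : pauli Q) : {set pauli Q} :=
  [set P in normaliser S | pmul L P \in S].

Definition c_disjoint (Q : finType) (c : nat) (F : {set pauli Q}) : bool :=
  [forall i : Q, #|[set P in F | i \in support P]| <= c].

Definition has_disj (Q : finType) (S : {set pauli Q}) (c m : nat) : bool :=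
  [forall L : pauli Q, nontrivial_logical S L ==>
     [exists F : {set pauli Q},
        [&& F \subset reps S L, c_disjoint c F & m <= #|F| ]]].

(* unnormalised c-disjointness: the largest such m (any such m is at most
   #|pauli Q| as soon as a nontrivial logical operator exists) *)
Definition disj' (Q : finType) (S : {set pauli Q}) (c : nat) : nat :=
  \max_(m < (#|pauli Q|).+1 | has_disj S c m) m.

Definition disjointness (R : realType) (Q : finType) (S : {set pauli Q}) : R :=
  sup [set x : R | exists c : nat, (0 < c)%N /\ x = ((disj' S c)%:R / c%:R)%R].

Definition one_logical_qubit (Q : finType) (S : {set pauli Q}) (Xb Zb : pauli Q) :=
  [/\ Xb \in normaliser S, Zb \in normaliser S, ~~ commuteb Xb Zb &
      forall P, P \in normaliser S ->
        exists a b : bool,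
          pmul P (pmul (if a then Xb else pid Q) (if b then Zb else pid Q)) \in S].

Definition enc1 (Q : finType) (Xb Zb : pauli Q) (p : bool * bool) : pauli Q :=
  pmul (if p.1 then Xb else pid Q) (if p.2 then Zb else pid Q).

Definition encode (Q1 Q2 : finType) (Xb Zb : pauli Q2) (P : pauli Q1)
  : pauli (Q1 * Q2)%type :=
  [ffun q => enc1 Xb Zb (P q.1) q.2].

Definition block_stab (Q1 Q2 : finType) (S2 : {set pauli Q2})
  : {set pauli (Q1 * Q2)%type} :=
  [set P : pauli (Q1 * Q2)%type | [forall b : Q1, ([ffun j => P (b, j)] : pauli Q2) \in S2]].

Definition concat_stab (Q1 Q2 : finType) (S1 : {set pauli Q1})
  (S2 : {set pauli Q2}) (Xb Zb : pauli Q2) : {set pauli (Q1 * Q2)%type} :=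
  [set pmul s (encode Xb Zb t) | s in block_stab Q1 S2, t in S1].

(* Main.v *)
Require Import Defs.
From mathcomp Require Import all_boot all_order all_algebra.
From mathcomp Require classical_sets reals.
Import Order.TTheory GRing.Theory Num.Theory.

Set Implicit Arguments.
Unset Strict Implicit.
Unset Printing Implicit Defensive.

Definition sym1 (p q : bool * bool) : bool := (p.1 && q.2) (+) (p.2 && q.1).
Definition sym (Q : finType) (P R : pauli Q) : bool :=
  \big[addb/false]_(i : Q) sym1 (P i) (R i).

Section Pauli.
Variable Q : finType.
Implicit Types P R T : pauli Q.

Lemma odd_card_big (f : Q -> bool) :
  odd #|[set i | f i]| = \big[addb/false]_i f i.
Proof.
rewrite -sum1_card big_mkcond /=.
elim/big_rec2: _ => // i n b _ <-.
by rewrite inE; case: (f i).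
Qed.

Lemma commuteE P R : commuteb P R = ~~ sym P R.
Proof. by rewrite /commuteb odd_card_big. Qed.

Lemma pmulC P R : pmul P R = pmul R P.
Proof. by apply/ffunP=> i; rewrite !ffunE addbC [(_ (+) (P i).2)]addbC. Qed.

Lemma pmulA P R T : pmul P (pmul R T) = pmul (pmul P R) T.
Proof. by apply/ffunP=> i; rewrite !ffunE /= !addbA. Qed.

Lemma pmul1P P : pmul (pid Q) P = P.
Proof. by apply/ffunP=> i; rewrite !ffunE /=; case: (P i). Qed.

Lemma pmulP1 P : pmul P (pid Q) = P.
Proof. by rewrite pmulC pmul1P. Qed.

Lemma pmulxx P : pmul P P = pid Q.
Proof. by apply/ffunP=> i; rewrite !ffunE /= !addbb. Qed.

Lemma pmulK P R : pmul P (pmul P R) = R.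
Proof. by rewrite pmulA pmulxx pmul1P. Qed.

Lemma symDl P R T : sym (pmul P R) T = sym P T (+) sym R T.
Proof.
rewrite /sym -big_split /=; apply: eq_bigr => i _.
rewrite ffunE /sym1 /=.
by case: (P i) => [[] []]; case: (R i) => [[] []]; case: (T i) => [[] []].
Qed.

Lemma symC P R : sym P R = sym R P.
Proof.
rewrite /sym; apply: eq_bigr => i _; rewrite /sym1.
by case: (P i) => [[] []]; case: (R i) => [[] []].
Qed.

Lemma symDr P R T : sym T (pmul P R) = sym T P (+) sym T R.
Proof. by rewrite symC symDl !(symC T). Qed.

Lemma sym1l T : sym (pid Q) T = false.
Proof. by rewrite /sym big1 // => i _; rewrite ffunE. Qed.

Lemma sym1r T : sym T (pid Q) = false.
Proof. by rewrite symC sym1l. Qed.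

Lemma symxx P : sym P P = false.
Proof.
rewrite /sym big1 // => i _; rewrite /sym1.
by case: (P i) => [[] []].
Qed.

Lemma inN (S : {set pauli Q}) P :
  (P \in normaliser S) = [forall s in S, ~~ sym P s].
Proof.
rewrite inE; apply: eq_forallb => s; by rewrite commuteE.
Qed.

Lemma inNP (S : {set pauli Q}) P :
  reflect (forall s, s \in S -> sym P s = false) (P \in normaliser S).
Proof.
rewrite inN; apply: (iffP forall_inP) => H s Hs; first by apply/negbTE/H.
by rewrite H.
Qed.

Lemma pmulN (S : {set pauli Q}) P R :
  P \in normaliser S -> R \in normaliser S -> pmul P R \in normaliser S.
Proof.
move=> /inNP HP /inNP HR; apply/inNP => s Hs.
by rewrite symDl HP // HR.
Qed.

Lemma pidN (S : {set pauli Q}) : pid Q \in normaliser S.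
Proof. by apply/inNP => s _; rewrite sym1l. Qed.

Lemma stab_sub_N (S : {set pauli Q}) :
  is_stabiliser S -> forall s, s \in S -> s \in normaliser S.
Proof.
case=> _ _ Hc s Hs; apply/inNP => t Ht.
by apply/negbTE; rewrite -commuteE Hc.
Qed.

Lemma N_sym_stab (S : {set pauli Q}) P s :
  P \in normaliser S -> s \in S -> sym s P = false.
Proof. by move=> /inNP H Hs; rewrite symC H. Qed.

End Pauli.

Lemma pmulACA (Q : finType) (A B C D : pauli Q) :
  pmul (pmul A B) (pmul C D) = pmul (pmul A C) (pmul B D).
Proof.
apply/ffunP=> i; rewrite !ffunE /=.
by case: (A i) => [[] []]; case: (B i) => [[] []]; case: (C i) => [[] []];
   case: (D i) => [[] []].
Qed.

Section Concat.
Variables (Q1 Q2 : finType) (Xb Zb : pauli Q2).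

Definition blk (P : pauli (Q1 * Q2)%type) (b : Q1) : pauli Q2 := [ffun j => P (b, j)].

Lemma symblk (P R : pauli (Q1 * Q2)%type) :
  sym P R = \big[addb/false]_b sym (blk P b) (blk R b).
Proof.
rewrite /sym.
under [RHS]eq_bigr => b _ do under eq_bigr => j _ do rewrite !ffunE.
rewrite pair_big /=; apply: eq_bigr => -[b j] _ //.
Qed.

Lemma blkM (P R : pauli (Q1 * Q2)%type) b : blk (pmul P R) b = pmul (blk P b) (blk R b).
Proof. by apply/ffunP=> j; rewrite !ffunE. Qed.

Lemma blk_enc (t : pauli Q1) b : blk (encode Xb Zb t) b = enc1 Xb Zb (t b).
Proof. by apply/ffunP=> j; rewrite !ffunE. Qed.

Lemma blk_pid b : blk (pid (Q1 * Q2)%type) b = pid Q2.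
Proof. by apply/ffunP=> j; rewrite !ffunE. Qed.

Lemma enc1M p q :
  enc1 Xb Zb (p.1 (+) q.1, p.2 (+) q.2) = pmul (enc1 Xb Zb p) (enc1 Xb Zb q).
Proof.
apply/ffunP=> i; rewrite /enc1 !ffunE /=.
case: p => [[] []]; case: q => [[] []]; rewrite /= !ffunE /=;
  case: (Xb i) => [[] []]; case: (Zb i) => [[] []] => //.
Qed.

Lemma enc1_pid : enc1 Xb Zb (false, false) = pid Q2.
Proof. by rewrite /enc1 /= pmul1P. Qed.

Lemma encodeM (a t : pauli Q1) :
  encode Xb Zb (pmul a t) = pmul (encode Xb Zb a) (encode Xb Zb t).
Proof.
apply/ffunP=> q; rewrite [LHS]ffunE [in RHS]ffunE.
have -> : pmul a t q.1 = ((a q.1).1 (+) (t q.1).1, (a q.1).2 (+) (t q.1).2)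
  by rewrite ffunE.
by rewrite enc1M !ffunE.
Qed.

Lemma encode_pid : encode Xb Zb (pid Q1) = pid (Q1 * Q2)%type.
Proof.
apply/ffunP=> q; rewrite [LHS]ffunE.
have -> : pid Q1 q.1 = (false, false) by rewrite ffunE.
by rewrite enc1_pid !ffunE.
Qed.

Hypothesis hXZ : sym Xb Zb = true.

Lemma sym_enc1 p q : sym (enc1 Xb Zb p) (enc1 Xb Zb q) = sym1 p q.
Proof.
rewrite /enc1 !symDl !symDr.
have hZX : sym Zb Xb = true by rewrite symC.
case: p => [[] []]; case: q => [[] []];
  rewrite /sym1 /= ?sym1l ?sym1r ?symxx ?hXZ ?hZX //.
Qed.

Lemma sym_encode (a t : pauli Q1) : sym (encode Xb Zb a) (encode Xb Zb t) = sym a t.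
Proof.
rewrite symblk /sym; apply: eq_bigr => b _.
by rewrite !blk_enc -/(sym _ _) sym_enc1.
Qed.

End Concat.

Section Main.
Variables (Q1 Q2 : finType) (S1 : {set pauli Q1}) (S2 : {set pauli Q2})
  (Xb Zb : pauli Q2).
Hypothesis hS1 : is_stabiliser S1.
Hypothesis hS2 : is_stabiliser S2.
Hypothesis hL : one_logical_qubit S2 Xb Zb.

Notation C := (concat_stab S1 S2 Xb Zb).
Notation BS := (block_stab Q1 S2).
Notation enc1 := (enc1 Xb Zb).
Notation encode := (encode Xb Zb).
Notation ff := (false, false).

Lemma hXZ : sym Xb Zb = true.
Proof. by case: hL => _ _ h _; move: h; rewrite commuteE negbK. Qed.

Lemma pid_S1 : pid Q1 \in S1. Proof. by case: hS1. Qed.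
Lemma pid_S2 : pid Q2 \in S2. Proof. by case: hS2. Qed.
Lemma mul_S1 P R : P \in S1 -> R \in S1 -> pmul P R \in S1.
Proof. by case: hS1 => _ h _; apply: h. Qed.
Lemma mul_S2 P R : P \in S2 -> R \in S2 -> pmul P R \in S2.
Proof. by case: hS2 => _ h _; apply: h. Qed.

Lemma inBS (s : pauli (Q1 * Q2)%type) : (s \in BS) = [forall b, blk s b \in S2].
Proof. by rewrite inE. Qed.

Lemma BS_mul s s' : s \in BS -> s' \in BS -> pmul s s' \in BS.
Proof.
rewrite !inBS => /forallP h /forallP h'; apply/forallP => b.
by rewrite blkM mul_S2.
Qed.

Lemma pid_BS : pid (Q1 * Q2)%type \in BS.
Proof. by rewrite inBS; apply/forallP => b; rewrite blk_pid pid_S2. Qed.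

Lemma enc1_N p : enc1 p \in normaliser S2.
Proof.
case: hL => hX hZ _ _.
by rewrite /Defs.enc1; case: p => [[] []] /=; apply: pmulN => //; apply: pidN.
Qed.

Lemma sym_BS_enc s (a : pauli Q1) : s \in BS -> sym s (encode a) = false.
Proof.
rewrite inBS => /forallP h; rewrite symblk big1 // => b _.
by rewrite blk_enc (N_sym_stab (enc1_N _)).
Qed.

Lemma sym_BS_BS s s' : s \in BS -> s' \in BS -> sym s s' = false.
Proof.
rewrite !inBS => /forallP h /forallP h'; rewrite symblk big1 // => b _.
by apply: N_sym_stab (h b); apply: stab_sub_N.
Qed.

Lemma sym_S1 t t' : t \in S1 -> t' \in S1 -> sym t t' = false.
Proof. by move=> ht ht'; apply: N_sym_stab ht; apply: stab_sub_N. Qed.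

Lemma inC P : reflect (exists s t, [/\ s \in BS, t \in S1 & P = pmul s (encode t)])
  (P \in C).
Proof.
apply: (iffP imset2P) => [[s t hs ht ->]|[s [t [hs ht ->]]]].
  by exists s, t.
by exists s t.
Qed.

Lemma C_sym x y : x \in C -> y \in C -> sym x y = false.
Proof.
move=> /inC [s [t [hs ht ->]]] /inC [s' [t' [hs' ht' ->]]].
rewrite !symDl !symDr sym_BS_BS // sym_BS_enc // (symC (encode t)) sym_BS_enc //.
by rewrite sym_encode ?hXZ // sym_S1.
Qed.

Lemma C_N x : x \in C -> x \in normaliser C.
Proof. by move=> hx; apply/inNP => y hy; apply: C_sym. Qed.

Lemma enc_C t : t \in S1 -> encode t \in C.
Proof. by move=> ht; apply/inC; exists (pid _), t; rewrite pmul1P pid_BS. Qed.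

Lemma enc1_S2 p : enc1 p \in S2 -> p = ff.
Proof.
move=> hp.
have h q : sym1 p q = false.
  by rewrite -(sym_enc1 hXZ) (N_sym_stab (enc1_N q)).
move: (h (false, true)) (h (true, false)); rewrite /sym1.
by case: p {hp h} => [[] []].
Qed.

Lemma pmul_cancel (Q : finType) (A B H : pauli Q) :
  pmul (pmul A H) (pmul B H) = pmul A B.
Proof. by rewrite pmulACA pmulxx pmulP1. Qed.

Lemma enc1_class p p' h :
  pmul (enc1 p) h \in S2 -> pmul (enc1 p') h \in S2 -> p = p'.
Proof.
move=> h1 h2; have := mul_S2 h1 h2; rewrite pmul_cancel -enc1M => /enc1_S2.
by case: p {h1 h2} => [[] []]; case: p' => [[] []].
Qed.

Lemma enc1_nontriv p : p != ff -> nontrivial_logical S2 (enc1 p).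
Proof.
move=> hp; rewrite /nontrivial_logical enc1_N /=.
by apply/negP => /enc1_S2 e; rewrite e eqxx in hp.
Qed.


Definition emb (b : Q1) (s2 : pauli Q2) : pauli (Q1 * Q2)%type :=
  [ffun q => if q.1 == b then s2 q.2 else ff].

Lemma blk_emb b s2 b' : blk (emb b s2) b' = if b' == b then s2 else pid Q2.
Proof. by apply/ffunP => j; rewrite !ffunE /=; case: ifP => //; rewrite ffunE. Qed.

Lemma blkN L b : L \in normaliser C -> blk L b \in normaliser S2.
Proof.
move=> /inNP LN; apply/inNP => s2 hs2.
have hE : emb b s2 \in C.
  apply/inC; exists (emb b s2), (pid Q1); split.
  - rewrite inBS; apply/forallP => b'; rewrite blk_emb.
    by case: ifP => _ //; apply: pid_S2.
  - exact: pid_S1.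
  - by rewrite encode_pid pmulP1.
have := LN _ hE; rewrite symblk (bigD1 b) //= blk_emb eqxx big1 ?addbF //.
by move=> b' /negbTE hb; rewrite blk_emb hb sym1r.
Qed.

Lemma decomp L : L \in normaliser C ->
  exists l s0, [/\ s0 \in BS, L = pmul s0 (encode l), l \in normaliser S1
                 & (l \in S1 -> L \in C)].
Proof.
move=> LN.
pose l : pauli Q1 := [ffun b => odflt ff [pick p | pmul (blk L b) (enc1 p) \in S2]].
have hl b : pmul (blk L b) (enc1 (l b)) \in S2.
  rewrite ffunE; case: pickP => [p hp //|H]; exfalso.
  case: hL => _ _ _ h; case: (h _ (blkN b LN)) => a [c hac].
  by move: (H (a, c)); rewrite /Defs.enc1 /= hac.
pose s0 := pmul L (encode l).
have hs0 : s0 \in BS.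
  by rewrite inBS; apply/forallP => b; rewrite blkM blk_enc.
have eL : L = pmul s0 (encode l) by rewrite -pmulA pmulxx pmulP1.
exists l, s0; split => //.
  apply/inNP => t ht.
  have := inNP _ _ LN _ (enc_C ht).
  by rewrite {1}eL symDl sym_BS_enc // sym_encode // hXZ.
by move=> hl1; apply/inC; exists s0, l.
Qed.


Lemma main c1 c2 m1 m2 : has_disj S1 c1 m1 -> has_disj S2 c2 m2 ->
  has_disj C (c1 * c2) (m1 * m2).
Proof.
move=> H1 H2; apply/forallP => L; apply/implyP => /andP [LN LnC].
case: (decomp LN) => l [s0 [hs0 eL lN lC]].
have lnt : nontrivial_logical S1 l.
  by rewrite /nontrivial_logical lN; apply/negP => /lC; rewrite (negbTE LnC).
have /existsP [F1 /and3P [F1sub F1dis F1card]] := implyP (forallP H1 l) lnt.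
pose G (p : bool * bool) := odflt finset.set0 [pick F : {set pauli Q2} | [&& F \subset reps S2 (enc1 p),
                                    c_disjoint c2 F & m2 <= #|F|]].
have hG p : p != ff ->
    [&& G p \subset reps S2 (enc1 p), c_disjoint c2 (G p) & m2 <= #|G p|].
  move=> hp; rewrite /G; case: pickP => [F -> //|H].
  have /existsP [F hF] := implyP (forallP H2 (enc1 p)) (enc1_nontriv hp).
  by rewrite H in hF.
pose g p (j : 'I_m2) := nth (pid Q2) (enum (G p)) j.
have g_lt p (j : 'I_m2) : p != ff -> j < size (enum (G p)).
  move=> hp; rewrite -cardE; case/and3P: (hG p hp) => _ _ h.
  exact: leq_trans (ltn_ord j) h.
have g_in p j : p != ff -> g p j \in G p.
  by move=> hp; rewrite /g -mem_enum; apply: mem_nth; apply: g_lt.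
have g_inj p : p != ff -> injective (g p).
  move=> hp j j' e; apply/val_inj/eqP.
  by rewrite -(nth_uniq (pid Q2) (g_lt p j hp) (g_lt p j' hp) (enum_uniq _)); apply/eqP; exact: e.
have g_rep p j : p != ff -> pmul (enc1 p) (g p j) \in S2.
  move=> hp; case/and3P: (hG p hp) => /fintype.subsetP hs _ _.
  by move: (hs _ (g_in p j hp)); rewrite inE => /andP [].
pose bl (r : pauli Q1) (j : 'I_m2) b := if r b == ff then pid Q2 else g (r b) j.
have bl_rep (r : pauli Q1) (j : 'I_m2) (b : Q1) : pmul (enc1 (r b)) (bl r j b) \in S2.
  rewrite /bl; case: eqP => [->|/eqP hp]; last exact: g_rep.
  by rewrite enc1_pid pmul1P pid_S2.
pose R (x : pauli Q1 * 'I_m2) : pauli (Q1 * Q2)%type :=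
  [ffun q => bl x.1 x.2 q.1 q.2].
have blkR x b : blk (R x) b = bl x.1 x.2 b by apply/ffunP => j; rewrite !ffunE.
pose F := R @: setX F1 [set: 'I_m2].
apply/existsP; exists F; apply/and3P; split.
- apply/fintype.subsetP => _ /imsetP [[r j] /setXP [hr _] ->].
  have /andP [rN hlr] : (r \in normaliser S1) && (pmul l r \in S1).
    by move: (fintype.subsetP F1sub r hr); rewrite inE.
  pose s1 := pmul (R (r, j)) (encode r).
  have hs1 : s1 \in BS.
    by rewrite inBS; apply/forallP => b; rewrite blkM blkR blk_enc pmulC bl_rep.
  have hLR : pmul L (R (r, j)) \in C.
    apply/inC; exists (pmul s0 s1), (pmul l r); split; [exact: BS_mul | done |].
    by rewrite encodeM pmulACA -eL /s1 -pmulA pmulxx pmulP1.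
  rewrite inE hLR andbT -(pmulK L (R (r, j))).
  by apply: pmulN => //; apply: C_N.
- apply/forallP => -[b q].
  pose F1b := [set r in F1 | b \in Defs.support r].
  pose J p := [set j : 'I_m2 | q \in Defs.support (g p j)].
  pose A := [set x : pauli Q1 * 'I_m2 | (x.1 \in F1b) && (x.2 \in J (x.1 b))].
  have sub : [set P in F | (b, q) \in Defs.support P] \subset R @: A.
    apply/fintype.subsetP => P; rewrite inE => /andP [/imsetP [[r j] /setXP [hr _] ->]] hs.
    apply/imsetP; exists (r, j) => //; rewrite inE /=.
    move: hs; rewrite !inE ffunE /= /bl.
    case: (r b =P ff) => [e|/eqP hp] hs; first by rewrite ffunE in hs.
    by rewrite hr hs.
  apply: leq_trans (subset_leq_card sub) _; apply: leq_trans (leq_imset_card _ _) _.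
  have cardA : #|A| = \sum_(r in F1b) #|J (r b)|.
    rewrite -sum1_card.
    rewrite (eq_bigl (fun x => (x.1 \in F1b) && (x.2 \in J (x.1 b)))); last first.
      by move=> x; rewrite inE.
    rewrite -(pair_big_dep (fun r => r \in F1b) (fun r j => j \in J (r b))
                (fun _ _ => 1)).
    by apply: eq_bigr => r _; rewrite sum1_card.
  rewrite cardA; apply: (@leq_trans (\sum_(r in F1b) c2)).
    apply: leq_sum => r; rewrite inE => /andP [_ hb].
    have hp : r b != ff by rewrite inE in hb.
    case/and3P: (hG _ hp) => _ /forallP Gd _.
    apply: leq_trans (Gd q).
    rewrite -(card_imset _ (g_inj _ hp)).
    apply/subset_leq_card/fintype.subsetP => _ /imsetP [j hj ->].
    by rewrite inE g_in //; rewrite inE in hj.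
  rewrite sum_nat_const; apply: leq_mul => //.
  exact: (forallP F1dis b).
- rewrite card_in_imset; last first.
    move=> [r j] [r' j'] /setXP [hr _] /setXP [hr' _] e.
    have er : r = r'.
      apply/ffunP => b; have := bl_rep r j b; have := bl_rep r' j' b.
      have eb : bl r j b = bl r' j' b.
        by rewrite -(blkR (r, j)) -(blkR (r', j')) e.
      by rewrite eb => h1 h2; apply: (enc1_class h2 h1).
    subst r'.
    have hlr : pmul l r \in S1.
      by move: (fintype.subsetP F1sub r hr); rewrite inE => /andP [].
    case: (pickP (fun b => r b != ff)) => [b hb | H]; last first.
      have rid : r = pid Q1.
        by apply/ffunP => b; rewrite ffunE; move: (H b) => /negbFE/eqP.
      by rewrite rid pmulP1 in hlr; move: (lC hlr); rewrite (negbTE LnC).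
    have eb : bl r j b = bl r j' b.
      by rewrite -(blkR (r, j)) -(blkR (r, j')) e.
    by move: eb; rewrite /bl (negbTE hb) => /(g_inj _ hb) ->.
  by rewrite cardsX cardsT card_ord leq_mul.
Qed.


Lemma enc_nontriv L0 : nontrivial_logical S1 L0 -> nontrivial_logical C (encode L0).
Proof.
case/andP => /inNP L0N L0nS.
apply/andP; split.
  apply/inNP => x /inC [s [t [hs ht ->]]].
  by rewrite symDr symC sym_BS_enc // sym_encode ?hXZ // L0N.
apply/negP => /inC [s [t [hs ht e]]].
have es : s = encode (pmul L0 t) by rewrite encodeM e -pmulA pmulxx pmulP1.
have hid : pmul L0 t = pid Q1.
  apply/ffunP => b; rewrite [RHS]ffunE; apply: enc1_S2.
  by move: hs; rewrite es inBS => /forallP /(_ b); rewrite blk_enc.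
have : L0 = t by rewrite -[L0]pmulP1 -(pmulxx t) pmulA hid pmul1P.
by move=> et; rewrite et ht in L0nS.
Qed.

End Main.

From mathcomp Require Import classical_sets reals.
Import Order.TTheory GRing.Theory Num.Theory.
Local Open Scope ring_scope.

Lemma has_disj0 (Q : finType) (S : {set pauli Q}) c : has_disj S c 0.
Proof.
apply/forallP => L; apply/implyP => _; apply/existsP; exists finset.set0.
rewrite finset.sub0set leq0n andbT /=; apply/forallP => i.
by rewrite (_ : [set P in finset.set0 | _] = finset.set0) ?cards0 //;
  apply/finset.setP => P; rewrite !inE.
Qed.

Lemma disj'_le (Q : finType) (S : {set pauli Q}) c : (disj' S c <= #|pauli Q|)%N.
Proof. by apply/bigmax_leqP => i _; rewrite -ltnS. Qed.

Lemma disj'_spec (Q : finType) (S : {set pauli Q}) c : has_disj S c (disj' S c).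
Proof.
have pos : (0 < #|(fun m : 'I_(#|pauli Q|).+1 => has_disj S c m)|)%N.
  by apply/card_gt0P; exists ord0; rewrite /in_mem /= has_disj0.
have [i0 Hi0 E] := eq_bigmax_cond (fun m : 'I_(#|pauli Q|).+1 => nat_of_ord m) pos.
have -> : disj' S c = i0 by exact: E.
exact: Hi0.
Qed.

Lemma disj'_ge (Q : finType) (S : {set pauli Q}) c m :
  has_disj S c m -> (m <= #|pauli Q|)%N -> (m <= disj' S c)%N.
Proof.
move=> h hm; rewrite -ltnS in hm.
exact: (leq_bigmax_cond (Ordinal hm) h).
Qed.

Lemma sup_ub (R : realType) (X : set R) x : has_sup X -> X x -> x <= sup X.
Proof. by move=> hX Xx; have := sup_upper_bound hX; apply. Qed.

Section Reals.
Variable R : realType.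

Lemma sup_mul (A B C : set R) :
  has_sup A -> has_sup B -> (forall a, A a -> 0 <= a) -> (forall b, B b -> 0 <= b) ->
  (forall a b, A a -> B b -> a * b <= sup C) -> sup A * sup B <= sup C.
Proof.
move=> hA hB A0 B0 hAB.
have [a0 Aa0] := hA.1; have [b0 Bb0] := hB.1.
have C0 : 0 <= sup C by apply: (le_trans _ (hAB _ _ Aa0 Bb0)); apply: mulr_ge0; auto.
have ub (X : set R) x : has_sup X -> X x -> x <= sup X.
  by move=> hX Xx; have := sup_upper_bound hX; apply.
have sA : 0 <= sup A by apply: le_trans (A0 _ Aa0) (ub _ _ hA Aa0).
have sB : 0 <= sup B by apply: le_trans (B0 _ Bb0) (ub _ _ hB Bb0).
have step a : A a -> a * sup B <= sup C.
  move=> Aa; have := A0 _ Aa; rewrite le0r => /orP [/eqP -> | ap].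
    by rewrite mul0r.
  rewrite -ler_pdivlMl //; apply: ge_sup hB.1 _ => b Bb.
  by rewrite ler_pdivlMl //; apply: hAB.
move: sB; rewrite le0r => /orP [/eqP -> | bp]; first by rewrite mulr0.
rewrite -ler_pdivlMr //; apply: ge_sup hA.1 _ => a Aa.
by rewrite ler_pdivlMr //; apply: step.
Qed.

End Reals.

Lemma disj_has_sup (R : realType) (Q : finType) (S : {set pauli Q}) :
  has_sup [set x : R | exists c : nat, (0 < c)%N /\ x = ((disj' S c)%:R / c%:R)%R].
Proof.
split; first by exists ((disj' S 1)%:R / 1%:R); exists 1%N.
exists (#|pauli Q|)%:R => _ [c [c0 ->]].
rewrite ler_pdivrMr ?ltr0n //.
rewrite -natrM ler_nat; have h := disj'_le S c.
by apply: (leq_trans h); rewrite leq_pmulr.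
Qed.

Theorem lemma5 (R : realType) (Q1 Q2 : finType)
  (S1 : {set pauli Q1}) (S2 : {set pauli Q2}) (Xb Zb : pauli Q2) :
  is_stabiliser S1 ->
  (exists L : pauli Q1, nontrivial_logical S1 L) ->
  is_stabiliser S2 ->
  one_logical_qubit S2 Xb Zb ->
  disjointness R S1 * disjointness R S2
    <= disjointness R (concat_stab S1 S2 Xb Zb).
Proof.
move=> hS1 [L0 hL0] hS2 hL.
apply: sup_mul; try exact: disj_has_sup.
- by move=> _ [c [c0 ->]]; apply: divr_ge0.
- by move=> _ [c [c0 ->]]; apply: divr_ge0.
move=> _ _ [c1 [c10 ->]] [c2 [c20 ->]].
set C := concat_stab S1 S2 Xb Zb.
have hd := main hS1 hS2 hL (disj'_spec S1 c1) (disj'_spec S2 c2).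
have hb : (disj' S1 c1 * disj' S2 c2 <= #|pauli (Q1 * Q2)%type|)%N.
  have /existsP [F /and3P [_ _ hF]] :=
    implyP (forallP hd (encode Xb Zb L0)) (enc_nontriv hL hL0).
  exact: leq_trans hF (max_card _).
have hge := disj'_ge hd hb.
apply: (@le_trans _ _ ((disj' C (c1 * c2))%:R / (c1 * c2)%:R)); last first.
  apply: sup_ub; first exact: disj_has_sup.
  by exists (c1 * c2)%N; split; [rewrite muln_gt0 c10 c20|].
rewrite mulrACA -invfM -!natrM.
apply: ler_wpM2r; first by rewrite invr_ge0 ler0n.
by rewrite ler_nat.
Qed.
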